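(* Let $n\ge1$, $U=\mathcal{U}(osp(1|2n))$ and $\Omega\subset U$ as defined below. For every $a\in\{1,\dots,2n\}$, $\sigma_a\triangleright\Omega\subset\Omega$. Consequently the action $\triangleright$ makes $\Omega$ an $osp(1|2n)$-submodule of $U$.
   Context: $\mathcal{U}(osp(1|2n))$ is the associative superalgebra over $\mathbb{C}$ generated by odd elements $\sigma_a$ and even elements $\sigma_{ab}=\sigma_{ba}$ ($1\le a,b\le 2n$) subject to $\{\sigma_a,\sigma_b\}=\sigma_{ab}$, $[\sigma_a,\sigma_{bc}]=-g_{ab}\sigma_c-g_{ac}\sigma_b$, $[\sigma_{ab},\sigma_{cd}]=-g_{ac}\sigma_{bd}-g_{ad}\sigma_{bc}-g_{bc}\sigma_{ad}-g_{bd}\sigma_{ac}$, where $(g_{ab})=\begin{pmatrix}0&-I_n\\ I_n&0\end{pmatrix}$. The action $\triangleright$ on homogeneous $x\in U$ is: $\sigma_{ab}\triangleright x=[\sigma_{ab},x]$; $\sigma_a\triangleright x=\sigma_ax+x\sigma_a$ if $x$ is even; $\sigma_a\triangleright x=\sigma_ax-x\sigma_a$ if $x$ is odd. This action satisfies $\{\sigma_a,\sigma_b\}\triangleright x=\sigma_a\triangleright(\sigma_b\triangleright x)+\sigma_b\triangleright(\sigma_a\triangleright x)$ and the analogous identities for the other relations, so it makes $U$ an $osp(1|2n)$-module. For indices $a_1,\dots,a_p$, $[a_1\dots a_p]=\sum_{s\in\mathfrak{S}_p}\varepsilon(s)\sigma_{a_{s(1)}}\cdots\sigma_{a_{s(p)}}$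 ($[\,]=1$ for $p=0$), and $\Omega$ is the span of these for $0\le p\le 2n$. *)

(* Defs.v *)
From HB Require Import structures.
From mathcomp Require Import all_boot all_order all_algebra all_fingroup.
From mathcomp Require Import complex Rstruct.
Set Implicit Arguments.
Unset Strict Implicit.
Unset Printing Implicit Defensive.
Import Order.TTheory GRing.Theory Num.Theory.
Local Open Scope ring_scope.

Definition C : fieldType := (Rdefinitions.R)[i].

(* Indices 1..2n are encoded as 'I_(2n) = {0,..,2n-1}. *)
(* g = [[0, -I_n],[I_n, 0]] : g_{a, a+n} = -1 and g_{a+n, a} = 1 (a < n). *)
Definition gmat (n : nat) (a b : 'I_(n.*2)) : C :=
  if (a < n)%N && (b == a + n :> nat)%N then -1
  else if (n <= a)%N && (b + n == a :> nat)%N then 1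
  else 0.

(* The defining relations of U(osp(1|2n)) for elements
   s1 a (odd sigma_a) and s2 a b (even sigma_ab) of an algebra A. *)
Definition osp_relations (n : nat) (A : algType C)
    (s1 : 'I_(n.*2) -> A) (s2 : 'I_(n.*2) -> 'I_(n.*2) -> A) : Prop :=
  [/\ (forall a b, s2 a b = s2 b a),
      (forall a b, s1 a * s1 b + s1 b * s1 a = s2 a b),
      (forall a b c, s1 a * s2 b c - s2 b c * s1 a
                     = - (gmat a b *: s1 c) - gmat a c *: s1 b) &
      (forall a b c d, s2 a b * s2 c d - s2 c d * s2 a b
                       = - (gmat a c *: s2 b d) - gmat a d *: s2 b c
                         - gmat b c *: s2 a d - gmat b d *: s2 a c)].

(* (A, s1, s2) is THE universal enveloping algebra U(osp(1|2n)):
   it satisfies the relations and is initial among C-algebras with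
   elements satisfying them (existence and uniqueness of the algebra
   morphism sending generators to generators). *)
Definition is_U_osp (n : nat) (A : algType C)
    (s1 : 'I_(n.*2) -> A) (s2 : 'I_(n.*2) -> 'I_(n.*2) -> A) : Prop :=
  osp_relations s1 s2 /\
  forall (B : algType C) (t1 : 'I_(n.*2) -> B)
         (t2 : 'I_(n.*2) -> 'I_(n.*2) -> B),
    osp_relations t1 t2 ->
    (exists f : {lrmorphism A -> B},
        (forall a, f (s1 a) = t1 a) /\ (forall a b, f (s2 a b) = t2 a b)) /\
    (forall f g : {lrmorphism A -> B},
        (forall a, f (s1 a) = t1 a) -> (forall a b, f (s2 a b) = t2 a b) ->
        (forall a, g (s1 a) = t1 a) -> (forall a b, g (s2 a b) = t2 a b) ->
        f =1 g).

Definition antisym (n : nat) (A : algType C) (s1 : 'I_(n.*2) -> A)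
    (p : nat) (idx : 'I_p -> 'I_(n.*2)) : A :=
  \sum_(s : 'S_p) (-1) ^+ (odd_perm s) * \prod_(i < p) s1 (idx (s i)).

Definition in_Omega (n : nat) (A : algType C) (s1 : 'I_(n.*2) -> A)
    (x : A) : Prop :=
  exists (m : nat) (c : 'I_m -> C)
         (w : 'I_m -> {p : 'I_(n.*2).+1 & 'I_p -> 'I_(n.*2)}),
    x = \sum_(i < m) c i *: antisym s1 (tagged (w i)).

(* The odd-generator action on a homogeneous element x of parity par
   (par = true : odd): sigma_a |> x = sigma_a x + x sigma_a (x even),
   sigma_a x - x sigma_a (x odd). *)
Definition act_odd (A : algType C) (sa : A) (par : bool) (x : A) : A :=
  if par then sa * x - x * sa else sa * x + x * sa.

Definition act_even (A : algType C) (sab : A) (x : A) : A :=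
  sab * x - x * sab.

(* Main.v *)
Require Import Defs.
From HB Require Import structures.
From mathcomp Require Import all_boot all_order all_algebra all_fingroup.
From mathcomp Require Import complex Rstruct.
From mathcomp Require Import zify.
Import GRing.Theory.
Local Open Scope ring_scope.

Set Implicit Arguments.
Unset Strict Implicit.
Unset Printing Implicit Defensive.

Local Close Scope ring_scope.

Definition insT (T : Type) (j : nat) (a : T) (w : seq T) := take j w ++ a :: drop j w.

Lemma map_enum_ins (T : Type) p (j : 'I_p.+1) (f : 'I_p.+1 -> T) :
  map f (enum 'I_p.+1) = insT j (f j) (map (fun i => f (lift j i)) (enum 'I_p)).
Proof.
have hw : size (map (fun i => f (lift j i)) (enum 'I_p)) = p by rewrite size_map size_enum_ord.
have hj : (j <= p)%N by rewrite -ltnS.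
apply: (@eq_from_nth _ (f j)).
  rewrite size_map size_enum_ord /insT size_cat size_takel ?hw // /= size_drop hw; lia.
move=> i; rewrite size_map size_enum_ord => hi.
rewrite (nth_map j) ?size_enum_ord //.
set o := nth j (enum 'I_p.+1) i.
have ho : nat_of_ord o = i by rewrite /o nth_enum_ord.
rewrite /insT nth_cat size_takel ?hw //.
case: (unliftP j o) => [o'|] eo.
  have ho' : nat_of_ord (lift j o') = i by rewrite -eo.
  rewrite /= /bump in ho'.
  have hpo : (o' < p)%N := ltn_ord o'.
  case: ifP => hij.
    rewrite nth_take // (nth_map o') ?size_enum_ord; last by lia.
    rewrite eo; congr (f (lift j _)); apply: val_inj; rewrite /= nth_enum_ord; lia.
  have -> : (i - j = (i - j).-1.+1)%N by lia.
  rewrite /= nth_drop (nth_map o') ?size_enum_ord; last by lia.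
  rewrite eo; congr (f (lift j _)); apply: val_inj; rewrite /= nth_enum_ord; lia.
have -> : i = j by rewrite -ho eo.
by rewrite ltnn subnn eo.
Qed.

Local Open Scope ring_scope.

Lemma sum_perm_lift (V : nmodType) m (i : 'I_m.+1) (F : 'S_m.+1 -> V) :
  \sum_(s : 'S_m.+1) F s = \sum_(k < m.+1) \sum_(s : 'S_m) F (lift_perm i k s).
Proof.
rewrite (partition_big (fun s : 'S_m.+1 => s i) predT) //=.
apply: eq_bigr => k _.
rewrite (reindex (lift_perm i k)); last first.
  pose ulsf i (s : 'S_m.+1) k := odflt k (unlift (s i) (s (lift i k))).
  have ulsfK i0 (s : 'S_m.+1) k0: lift (s i0) (ulsf i0 s k0) = s (lift i0 k0).
    rewrite /ulsf; have:= neq_lift i0 k0.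
    by rewrite -(can_eq (permK s)) => /unlift_some[] ? ? ->.
  have inj_ulsf: injective (ulsf i _).
    move=> s; apply: can_inj (ulsf (s i) s^-1%g) _ => k'.
    by rewrite {1}/ulsf ulsfK !permK liftK.
  exists (fun s => perm (inj_ulsf s)) => [s _ | s].
    by apply/permP=> k'; rewrite permE /ulsf lift_perm_lift lift_perm_id liftK.
  move/(s _ =P _) => si0; apply/permP=> k0.
  case: (unliftP i k0) => [k'|] ->; rewrite ?lift_perm_id //.
  by rewrite lift_perm_lift -si0 permE ulsfK.
by apply: eq_bigl => s; rewrite lift_perm_id eqxx.
Qed.

Lemma sum_perm_lift_inv (V : nmodType) m (k : 'I_m.+1) (F : 'S_m.+1 -> V) :
  \sum_(s : 'S_m.+1) F s = \sum_(j < m.+1) \sum_(s : 'S_m) F (lift_perm j k s).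
Proof.
have hi : injective (fun s : 'S_m.+1 => s^-1%g) by exact: invg_inj.
rewrite (reindex_inj hi) (sum_perm_lift k) /=.
apply: eq_bigr => j _.
have hi' : injective (fun s : 'S_m => s^-1%g) by exact: invg_inj.
rewrite (reindex_inj hi') /=.
by apply: eq_bigr => s _; rewrite lift_permV invgK.
Qed.

Section Alg.
Variable (A : algType C).

Inductive spanP (P : A -> Prop) : A -> Prop :=
 | sp0 : spanP P 0
 | spB x : P x -> spanP P x
 | spL a x y : spanP P x -> spanP P y -> spanP P (a *: x + y).

Lemma spanD P x y : spanP P x -> spanP P y -> spanP P (x + y).
Proof. by move=> hx hy; rewrite -[x]scale1r; apply: spL. Qed.

Lemma spanZ P a x : spanP P x -> spanP P (a *: x).
Proof. by move=> hx; rewrite -[_ *: _]addr0; apply: spL => //; apply: sp0. Qed.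

Lemma spanN P x : spanP P x -> spanP P (- x).
Proof. by move=> hx; rewrite -scaleN1r; apply: spanZ. Qed.

Lemma spanB P x y : spanP P x -> spanP P y -> spanP P (x - y).
Proof. by move=> hx hy; apply: spanD => //; apply: spanN. Qed.

Lemma span_sum P (I : Type) (r : seq I) (Q : pred I) (F : I -> A) :
  (forall i, Q i -> spanP P (F i)) -> spanP P (\sum_(i <- r | Q i) F i).
Proof. by move=> h; apply: big_ind => //; [apply: sp0 | apply: spanD]. Qed.

Lemma span_sign P b x : spanP P x -> spanP P ((-1) ^+ b * x).
Proof.
move=> hx; rewrite -signr_odd; case: (odd b); rewrite ?expr0 ?expr1 ?mul1r ?mulN1r //; exact: spanN.
Qed.

Lemma span_mono (P Q : A -> Prop) x : (forall y, P y -> spanP Q y) -> spanP P x -> spanP Q x.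
Proof.
move=> h; elim=> [|y Py|a y z _ hy _ hz]; [exact: sp0 | exact: h | exact: spL].
Qed.

Lemma span_lin (P Q : A -> Prop) (f : A -> A) x :
  (forall a u v, f (a *: u + v) = a *: f u + f v) ->
  (forall y, P y -> spanP Q (f y)) -> spanP P x -> spanP Q (f x).
Proof.
move=> lf h; have f0 : f 0 = 0.
  by have := lf (-1) 0 0; rewrite scaler0 add0r scaleN1r addNr.
elim=> [|y Py|a y z _ hy _ hz]; first by rewrite f0; apply: sp0.
  exact: h.
by rewrite lf; apply: spL.
Qed.

Lemma act_odd_lin (sa : A) par a (u v : A) :
  act_odd sa par (a *: u + v) = a *: act_odd sa par u + act_odd sa par v.
Proof.
rewrite /act_odd; case: par;
  rewrite mulrDr mulrDl -?scalerAr -?scalerAl ?opprD ?scalerBr ?scalerDr; exact: addrACA.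
Qed.

Lemma act_odd_linx par a (u v x : A) :
  act_odd (a *: u + v) par x = a *: act_odd u par x + act_odd v par x.
Proof.
rewrite /act_odd; case: par;
  rewrite mulrDr mulrDl -?scalerAr -?scalerAl ?opprD ?scalerBr ?scalerDr; exact: addrACA.
Qed.

Lemma act_even_lin (sa : A) a (u v : A) :
  act_even sa (a *: u + v) = a *: act_even sa u + act_even sa v.
Proof.
rewrite /act_even mulrDr mulrDl -scalerAr -scalerAl opprD scalerBr; exact: addrACA.
Qed.

Lemma act_anti (x y z : A) par :
  act_odd x (~~ par) (act_odd y par z) + act_odd y (~~ par) (act_odd x par z)
  = act_even (x * y + y * x) z.
Proof.
rewrite /act_odd /act_even; case: par => /=;
apply/eqP; rewrite -subr_eq0; rewrite !(mulrDr, mulrDl, mulrBr, mulrBl, mulrN, mulNr, opprD, opprK, mulrA, addrA).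
all: by rewrite (ACl (1*9*2*7*3*6*4*12*5*10*8*11)) /= !(subrr, addNr, add0r).
Qed.

Lemma act_deriv (a x y : A) par :
  act_even a (act_odd x par y) = act_odd x par (act_even a y) + act_odd (act_even a x) par y.
Proof.
rewrite /act_odd /act_even; case: par => /=;
apply/eqP; rewrite -subr_eq0; rewrite !(mulrDr, mulrDl, mulrBr, mulrBl, mulrN, mulNr, opprD, opprK, mulrA, addrA).
all: by rewrite (ACl (1*9*2*7*3*6*4*12*5*10*8*11)) /= !(subrr, addNr, add0r).
Qed.

Lemma act_odd_0x par (x : A) : act_odd 0 par x = 0.
Proof. by rewrite /act_odd mul0r mulr0 subrr add0r; case: par. Qed.

Lemma act_odd_Zx par a (u x : A) : act_odd (a *: u) par x = a *: act_odd u par x.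
Proof. by rewrite -[a *: u]addr0 act_odd_linx act_odd_0x addr0. Qed.

Lemma act_odd_D (sa : A) par (u v : A) :
  act_odd sa par (u + v) = act_odd sa par u + act_odd sa par v.
Proof. by have := act_odd_lin sa par 1 u v; rewrite !scale1r. Qed.

Variables (n : nat) (s1 : 'I_(n.*2) -> A) (s2 : 'I_(n.*2) -> 'I_(n.*2) -> A).
Hypothesis Hrel : osp_relations s1 s2.
Local Notation I := 'I_(n.*2).

Lemma R2 a b : s1 a * s1 b + s1 b * s1 a = s2 a b.
Proof. by case: Hrel. Qed.

Lemma ad_s1 d e x : act_even (s2 d e) (s1 x) = gmat x d *: s1 e + gmat x e *: s1 d.
Proof.
case: Hrel => _ _ R3 _.
by rewrite /act_even -opprB R3 opprB opprK addrC.
Qed.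

Fixpoint phi (w : seq I) : A :=
  if w is x :: w' then act_odd (s1 x) (odd (size w')) (phi w') else 1.

Definition Sp k := spanP (fun y => exists u : seq I, size u = k /\ y = phi u).

Lemma Sp_cons x k y : Sp k y -> Sp k.+1 (act_odd (s1 x) (odd k) y).
Proof.
move=> hy; apply: (span_lin (act_odd_lin (s1 x) (odd k))) hy => _ [u [hu ->]].
by apply: spB; exists (x :: u); rewrite /= hu.
Qed.

Lemma Sp_ad d e w : Sp (size w) (act_even (s2 d e) (phi w)).
Proof.
elim: w => [|x w IH] /=.
  by rewrite /act_even mulr1 mul1r subrr; apply: sp0.
rewrite act_deriv ad_s1 act_odd_linx act_odd_Zx.
apply: spanD; first exact: Sp_cons.
by apply: spanD; apply: spanZ; apply: spB; [exists (e :: w) | exists (d :: w)].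
Qed.

Definition ins (j : nat) (a : I) (w : seq I) := take j w ++ a :: drop j w.

Lemma size_ins j a w : size (ins j a w) = (size w).+1.
Proof. by rewrite /ins size_cat /= addnS -size_cat cat_take_drop. Qed.

Lemma swap_ins j a w : (j < size w)%N ->
  Sp (size w).-1 (phi (ins j.+1 a w) + phi (ins j a w)).
Proof.
elim: w j => [|y w IH] [|j] //= hj.
  rewrite /ins /= take0 drop0 /= act_anti R2; exact: Sp_ad.
rewrite !size_ins -act_odd_D.
have hw : (0 < size w)%N by case: (size w) hj.
have := IH j hj; case: (size w) hw => [|k] //= _ h.
by rewrite negbK; exact: (Sp_cons y h).
Qed.

Lemma ins_move j a w : (j <= size w)%N ->
  Sp (size w).-1 (phi (ins j a w) - (-1) ^+ j * phi (a :: w)).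
Proof.
elim: j => [|j IH] hj.
  by rewrite /ins take0 drop0 /= expr0 mul1r subrr; apply: sp0.
have e : phi (ins j.+1 a w) - (-1) ^+ j.+1 * phi (a :: w) =
   (phi (ins j.+1 a w) + phi (ins j a w)) - (phi (ins j a w) - (-1) ^+ j * phi (a :: w)).
  by rewrite exprS mulN1r mulNr opprK opprB addrA (addrAC _ (phi (ins j a w))) addrK.
rewrite e; apply: spanB; first exact: swap_ins.
by apply: IH; apply: ltnW.
Qed.

Lemma act_odd_0 (sa : A) par : act_odd sa par 0 = 0.
Proof. by rewrite /act_odd mulr0 mul0r subrr addr0; case: par. Qed.

Lemma act_odd_N (sa : A) par (u : A) : act_odd sa par (- u) = - act_odd sa par u.
Proof. by have := act_odd_lin sa par (-1) u 0; rewrite !addr0 act_odd_0 addr0 !scaleN1r. Qed.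

Lemma act_odd_sign (sa : A) par b (u : A) :
  act_odd sa par ((-1) ^+ b * u) = (-1) ^+ b * act_odd sa par u.
Proof. by rewrite -signr_odd; case: (odd b); rewrite ?expr0 ?expr1 ?mul1r ?mulN1r // act_odd_N. Qed.

Lemma act_odd_sum (sa : A) par (J : Type) (r : seq J) (P : pred J) (F : J -> A) :
  act_odd sa par (\sum_(i <- r | P i) F i) = \sum_(i <- r | P i) act_odd sa par (F i).
Proof.
exact: (big_morph _ (act_odd_D sa par) (act_odd_0 sa par)).
Qed.

Lemma act_odd_Z (sa : A) par a (u : A) : act_odd sa par (a *: u) = a *: act_odd sa par u.
Proof. by have := act_odd_lin sa par a u 0; rewrite !addr0 act_odd_0 addr0. Qed.

Lemma act_odd_form (sa : A) m (u : A) :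
  act_odd sa (odd m) u = sa * u + (-1) ^+ m * (u * sa).
Proof. by rewrite /act_odd -signr_odd; case: (odd m); rewrite ?expr0 ?expr1 ?mul1r ?mulN1r. Qed.

Lemma anti_first m (c : 'I_m.+1 -> I) :
  antisym s1 c = \sum_(k < m.+1) (-1) ^+ k * (s1 (c k) * antisym s1 (fun i => c (lift k i))).
Proof.
rewrite /antisym (sum_perm_lift ord0); apply: eq_bigr => k _.
rewrite big_distrr /= big_distrr /=; apply: eq_bigr => s _.
rewrite odd_lift_perm !signr_addb big_ord_recl lift_perm_id.
rewrite (eq_bigr (fun i => s1 (c (lift k (s i))))); last by move=> i _; rewrite lift_perm_lift.
rewrite (_ : (-1) ^+ odd (@ord0 m) = 1 :> A) // mul1r signr_odd.
rewrite -signr_addb -mulrA; congr (_ * _).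
by rewrite mulrA -(commr_sign (s1 (c k))) -mulrA.
Qed.

Lemma anti_last m (c : 'I_m.+1 -> I) :
  antisym s1 c = \sum_(k < m.+1) (-1) ^+ (m + k) * (antisym s1 (fun i => c (lift k i)) * s1 (c k)).
Proof.
rewrite /antisym (sum_perm_lift ord_max); apply: eq_bigr => k _.
rewrite big_distrl /= big_distrr /=; apply: eq_bigr => s _.
rewrite odd_lift_perm signr_addb (signr_addb _ (odd ord_max)) !signr_odd big_ord_recr lift_perm_id exprD.
have -> : \prod_(i < m) s1 (c (lift_perm ord_max k s (widen_ord (leqnSn m) i)))
        = \prod_(i < m) s1 (c (lift k (s i))).
  apply: eq_bigr => i _; rewrite -(lift_perm_lift ord_max); congr (s1 (c (_ _))).
  by apply: val_inj; rewrite /= /bump leqNgt ltn_ord add0n.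
rewrite -!mulrA; congr (_ * (_ * _)); exact: mulrA.
Qed.

Definition word m (c : 'I_m -> I) (s : 'S_m) : seq I := [seq c (s i) | i <- enum 'I_m].
Definition Phi m (c : 'I_m -> I) : A := \sum_(s : 'S_m) (-1) ^+ s * phi (word c s).

Lemma size_word m (c : 'I_m -> I) s : size (word c s) = m.
Proof. by rewrite size_map size_enum_ord. Qed.

Lemma word_first m (c : 'I_m.+1 -> I) k (s : 'S_m) :
  word c (lift_perm ord0 k s) = c k :: word (fun i => c (lift k i)) s.
Proof.
rewrite /word enum_ordSl /= lift_perm_id -map_comp; congr (_ :: _).
by apply: eq_map => i /=; rewrite lift_perm_lift.
Qed.

Lemma Phi_first m (c : 'I_m.+1 -> I) :
  Phi c = \sum_(k < m.+1) (-1) ^+ k * act_odd (s1 (c k)) (odd m) (Phi (fun i => c (lift k i))).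
Proof.
rewrite /Phi (sum_perm_lift ord0); apply: eq_bigr => k _.
rewrite act_odd_sum big_distrr; apply: eq_bigr => s _.
rewrite word_first /= size_word act_odd_sign odd_lift_perm signr_addb (signr_addb _ (odd ord0)).
by rewrite (_ : (-1) ^+ odd (@ord0 m) = 1 :> A) // mul1r signr_odd mulrA.
Qed.

Lemma Phi_A m (c : 'I_m -> I) : Phi c = (2 ^+ m : C) *: antisym s1 c.
Proof.
elim: m c => [|m IH] c.
  rewrite expr0 scale1r /Phi /antisym; apply: eq_bigr => s _.
  by rewrite big_ord0; congr (_ * _); rewrite /word; case: (enum 'I_0) (size_enum_ord 0).
rewrite Phi_first.
rewrite (eq_bigr (fun k : 'I_m.+1 => (2 ^+ m : C) *: ((-1) ^+ k * act_odd (s1 (c k)) (odd m)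
            (antisym s1 (fun i => c (lift k i)))))); last first.
  by move=> k _; rewrite IH act_odd_Z scalerAr.
rewrite -scaler_sumr exprS mulrC -scalerA; congr (_ *: _).
rewrite scaler_nat mulr2n {1}anti_first anti_last -big_split /=.
apply: eq_bigr => k _; rewrite act_odd_form mulrDr; congr (_ + _).
by rewrite mulrA -exprD addnC exprD.
Qed.

Definition dcons p (a : I) (c : 'I_p -> I) : 'I_p.+1 -> I :=
  fun i => if unlift ord0 i is Some j then c j else a.

Lemma word_ins p a (c : 'I_p -> I) j (s : 'S_p) :
  word (dcons a c) (lift_perm j ord0 s) = ins j a (word c s).
Proof.
rewrite /word (map_enum_ins j) lift_perm_id /dcons unlift_none /ins /insT.
by congr (_ ++ _ :: _); congr (_ _ _); apply: eq_map => i; rewrite lift_perm_lift liftK.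
Qed.

Definition X0 p (c : 'I_p -> I) a := \sum_(s : 'S_p) (-1) ^+ s * phi (a :: word c s).

Lemma X0_eq p (c : 'I_p -> I) a :
  Phi (dcons a c) - p.+1%:R *: X0 c a =
  \sum_(j < p.+1) \sum_(s : 'S_p) (-1) ^+ j * ((-1) ^+ s *
      (phi (ins j a (word c s)) - (-1) ^+ j * phi (a :: word c s))).
Proof.
rewrite /Phi (sum_perm_lift_inv ord0).
have -> : p.+1%:R *: X0 c a = \sum_(j < p.+1) X0 c a.
  by rewrite sumr_const card_ord scaler_nat.
rewrite -sumrB; apply: eq_bigr => j _; rewrite /X0 -sumrB; apply: eq_bigr => s _.
rewrite word_ins odd_lift_perm signr_addb (signr_addb _ (odd j)).
rewrite (_ : (-1) ^+ odd (@ord0 p) = 1 :> A) // mulr1 signr_odd.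
rewrite !mulrBr !mulrA; congr (_ - _).
by rewrite -(commr_sign _ j) -!mulrA signrMK.
Qed.

Lemma X0_span p (c : 'I_p -> I) a :
  if p is 0 then Phi (dcons a c) - p.+1%:R *: X0 c a = 0
  else Sp p.-1 (Phi (dcons a c) - p.+1%:R *: X0 c a).
Proof.
rewrite X0_eq; case: p c => [|p] c.
  rewrite big_ord_recl big_ord0 addr0 big1 // => s _.
  by rewrite /ins take0 drop0 expr0 !mul1r subrr mulr0.
apply: span_sum => j _; apply: span_sum => s _; apply: span_sign; apply: span_sign.
have := @ins_move j a (word c s); rewrite size_word; apply.
by rewrite -ltnS.
Qed.

Lemma natC_neq0 k : (k.+1%:R : C) != 0.
Proof. have h : (k.+1%:R : Rdefinitions.R[i]) != 0 by rewrite Num.Theory.pnatr_eq0. exact: h. Qed.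

Lemma exp2C_neq0 k : ((2 : C) ^+ k) != 0.
Proof. by apply: expf_neq0; exact: (natC_neq0 1). Qed.

Definition Om k := spanP (fun y => exists q (c : 'I_q -> I),
   [/\ (q <= k)%N, odd q = odd k & y = antisym s1 c]).

Lemma Om_mono k k' y : (k <= k')%N -> odd k = odd k' -> Om k y -> Om k' y.
Proof.
move=> hk ho; apply: span_mono => _ [q [c [hq hoq ->]]].
by apply: spB; exists q, c; split => //; [exact: leq_trans hk | rewrite hoq].
Qed.

Lemma anti_Phi p (c : 'I_p -> I) : antisym s1 c = ((2 : C) ^+ p)^-1 *: Phi c.
Proof. by rewrite Phi_A scalerA mulVf ?exp2C_neq0 // scale1r. Qed.

Lemma act_Phi p (c : 'I_p -> I) x : act_odd (s1 x) (odd p) (Phi c) = X0 c x.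
Proof.
rewrite /Phi act_odd_sum; apply: eq_bigr => s _.
by rewrite act_odd_sign /= size_word.
Qed.

Lemma step p (c : 'I_p -> I) x :
  ((0 < p)%N -> forall u : seq I, size u = p.-1 -> Om p.+1 (phi u)) ->
  Om p.+1 (act_odd (s1 x) (odd p) (antisym s1 c)).
Proof.
move=> hyp.
rewrite anti_Phi act_odd_Z act_Phi; apply: spanZ.
have -> : X0 c x = (p.+1%:R : C)^-1 *:
   (Phi (dcons x c) - (Phi (dcons x c) - p.+1%:R *: X0 c x)).
  by rewrite opprB addrC subrK scalerA mulVf ?natC_neq0 // scale1r.
apply: spanZ; apply: spanB.
  by rewrite Phi_A; apply: spanZ; apply: spB; exists p.+1, (dcons x c).
have := X0_span c x; case: p c hyp => [|p] c hyp.
  by move=> ->; apply: sp0.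
apply: span_mono => _ [u [hu ->]]; exact: hyp.
Qed.

Lemma anti0 (c : 'I_0 -> I) : antisym s1 c = 1.
Proof.
have e : (fun s : 'S_0 => true) =1 pred1 (1%g : 'S_0).
  by move=> s /=; apply/esym/eqP/permP => -[].
by rewrite /antisym (eq_bigl _ _ e) big_pred1_eq odd_perm1 big_ord0 mulr1.
Qed.

Lemma M m w : (size w <= m)%N -> Om (size w) (phi w).
Proof.
elim: m w => [|m IH] w hw.
  case: w hw => //= _; apply: spB; exists 0%N, (fun i => widen_ord (leq0n n.*2) i).
  by split => //; rewrite anti0.
case: (leqP (size w) m) => hwm; first exact: IH.
case: w hw hwm => [|x w] //= hw hwm.
have hs : size w = m by lia.
apply: (span_lin (act_odd_lin (s1 x) (odd (size w)))) (IH w _) => [y [q [c [hq hoq ->]]]|];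
  last by rewrite hs.
rewrite -hoq; apply: (@Om_mono q.+1); first by [].
  by rewrite /= hoq.
apply: step => hq0 u hu.
have [q' eq] : exists q', q = q'.+1 by exists q.-1; lia.
rewrite eq /= in hu.
apply: (@Om_mono (size u)); first by lia.
  by rewrite hu eq /= negbK.
apply: IH; lia.
Qed.

Lemma Sp_Om k y : Sp k y -> Om k y.
Proof. by apply: span_mono => _ [u [hu ->]]; rewrite -hu; apply: (M (leqnn _)). Qed.

Lemma act_even_0 (sa : A) : act_even sa 0 = 0.
Proof. by rewrite /act_even mulr0 mul0r subrr. Qed.

Lemma act_even_Z (sa : A) a (u : A) : act_even sa (a *: u) = a *: act_even sa u.
Proof. by have := act_even_lin sa a u 0; rewrite !addr0 act_even_0 addr0. Qed.

Lemma act_even_D (sa : A) (u v : A) : act_even sa (u + v) = act_even sa u + act_even sa v.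
Proof. by have := act_even_lin sa 1 u v; rewrite !scale1r. Qed.

Lemma act_even_sum (sa : A) (J : Type) (r : seq J) (P : pred J) (F : J -> A) :
  act_even sa (\sum_(i <- r | P i) F i) = \sum_(i <- r | P i) act_even sa (F i).
Proof. exact: (big_morph _ (act_even_D sa) (act_even_0 sa)). Qed.

Lemma act_even_sign (sa : A) b (u : A) :
  act_even sa ((-1) ^+ b * u) = (-1) ^+ b * act_even sa u.
Proof.
rewrite -signr_odd; case: (odd b); rewrite ?expr0 ?expr1 ?mul1r ?mulN1r //.
by have := act_even_lin sa (-1) u 0; rewrite !addr0 act_even_0 addr0 !scaleN1r.
Qed.

Lemma step_even p (c : 'I_p -> I) a b : Om p (act_even (s2 a b) (antisym s1 c)).
Proof.
rewrite anti_Phi act_even_Z; apply: spanZ; rewrite /Phi act_even_sum.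
apply: span_sum => s _; rewrite act_even_sign; apply: span_sign; apply: Sp_Om.
by rewrite -{1}(size_word c s); apply: Sp_ad.
Qed.

Lemma anti_vanish p (c : 'I_p -> I) : (n.*2 < p)%N -> antisym s1 c = 0.
Proof.
move=> hp.
have [i [j [hij eij]]] : exists i j, i != j /\ c i = c j.
  case: (boolP [exists i, exists j, (i != j) && (c i == c j)]).
    by move=> /existsP [i /existsP [j /andP [h1 /eqP h2]]]; exists i, j.
  move=> hn; have hinj : injective c.
    move=> i j e; apply/eqP; apply: contraNT hn => h.
    by apply/existsP; exists i; apply/existsP; exists j; rewrite h e eqxx.
  by have := leq_card _ hinj; rewrite !card_ord leqNgt hp.
set x := antisym s1 c.
have hx : x = - x.
  rewrite {1}/x /antisym (reindex_inj (mulIg (tperm i j))) /= /x /antisym -sumrN.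
  apply: eq_bigr => s _; rewrite odd_permM odd_tperm hij signr_addb expr1 mulrN1 mulNr.
  congr (- (_ * _)); apply: eq_bigr => k _; rewrite permM.
  by case: tpermP => // ->; rewrite eij.
have h2 : (2%:R : C) *: x = 0 by rewrite scaler_nat mulr2n {1}hx addNr.
by rewrite -[x]scale1r -(mulVf (natC_neq0 1)) -scalerA h2 scaler0.
Qed.

Lemma inO_0 : in_Omega s1 0.
Proof.
by exists 0%N, (fun _ => 0), (fun _ => existT (fun p : 'I_(n.*2).+1 => 'I_p -> I) ord0 (fun i => widen_ord (leq0n n.*2) i)); rewrite big_ord0.
Qed.

Lemma inO_L a u v : in_Omega s1 u -> in_Omega s1 v -> in_Omega s1 (a *: u + v).
Proof.
move=> [m1 [c1 [w1 ->]]] [m2 [c2 [w2 ->]]].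
exists (m1 + m2)%N, (fun i => match split i with inl j => a * c1 j | inr j => c2 j end),
    (fun i => match split i with inl j => w1 j | inr j => w2 j end).
rewrite big_split_ord /= scaler_sumr; congr (_ + _); apply: eq_bigr => i _.
  by rewrite (unsplitK (inl _ _)) scalerA.
by rewrite (unsplitK (inr _ _)).
Qed.

Lemma Om_in k y : Om k y -> in_Omega s1 y.
Proof.
elim=> [|_ [q [c [_ _ ->]]]|a u v _ hu _ hv]; last exact: inO_L.
- exact: inO_0.
- case: (leqP q n.*2) => hq; last by rewrite anti_vanish //; apply: inO_0.
  exists 1%N, (fun _ => 1), (fun _ => existT _ (Ordinal (hq : (q < n.*2.+1)%N)) c).
  by rewrite big_ord1 scale1r.
Qed.

End Alg.

Unset Implicit Arguments.
Set Strict Implicit.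

Theorem proposition3 (n : nat) (hn : (1 <= n)%N) (A : algType C)
    (s1 : 'I_(n.*2) -> A) (s2 : 'I_(n.*2) -> 'I_(n.*2) -> A) :
  is_U_osp s1 s2 ->
  (forall (a : 'I_(n.*2)) (p : 'I_(n.*2).+1) (idx : 'I_p -> 'I_(n.*2)),
      in_Omega s1 (act_odd (s1 a) (odd p) (antisym s1 idx))) /\
  (forall (a b : 'I_(n.*2)) (x : A),
      in_Omega s1 x -> in_Omega s1 (act_even (s2 a b) x)).
Proof.
move=> [Hrel _]; split.
  move=> a p idx; apply: (@Om_in _ _ _ (nat_of_ord p).+1).
  apply: (step Hrel) => hp u hu.
  apply: (@Om_mono _ _ _ (size u)); first by lia.
    by rewrite hu; case: (nat_of_ord p) hp => //= q _; rewrite negbK.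
  exact: (M Hrel (leqnn _)).
move=> a b x [m [c [w ->]]].
rewrite act_even_sum; apply: big_ind => [|u v hu hv|i _].
- exact: inO_0.
- by rewrite -[u]scale1r; apply: inO_L.
- rewrite act_even_Z -[_ *: _]addr0; apply: inO_L; last exact: inO_0.
  exact: (Om_in (step_even Hrel _ a b)).
Qed.
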